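(* Let $G$ be a factor-critical graph with at least $7$ vertices. If $G$ is an edge-stable equimatchable graph which is not a complete graph on an odd number of vertices, then there is an independent set $S$ with $|S|\ge 2$ such that every vertex of $S$ is adjacent to every vertex of $V(G)\setminus S$.
   Context: All graphs are finite and simple. A graph is equimatchable if all its maximal matchings have the same cardinality; an equimatchable graph $G$ is edge-stable if $G\setminus e$ (delete edge $e$, keep vertices) is equimatchable for every $e\in E(G)$. A graph $G$ is factor-critical if $G-v$ has a perfect matching for every $v\in V(G)$. *)

(* Defs.v *)
(* A finite simple graph is a symmetric irreflexive
   relation e on a finType T (vertex set = T). Edges are 2-element sets
   {x,y} with e x y; matchings are sets of pairwise disjoint edges. *)
From mathcomp Require Import all_boot.
Set Implicit Arguments. Unset Strict Implicit. Unset Printing Implicit Defensive.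

Section Graphs.
Variable T : finType.

Definition is_edge (e : rel T) (f : {set T}) : bool :=
  [exists x, exists y, e x y && (f == [set x; y])].

Definition matching (e : rel T) (M : {set {set T}}) : bool :=
  [forall f in M, is_edge e f] &&
  [forall f in M, forall g in M, (f != g) ==> [disjoint f & g]].

Definition maximal_matching (e : rel T) (M : {set {set T}}) : Prop :=
  matching e M /\
  (forall f, is_edge e f -> f \notin M -> ~~ matching e (f |: M)).

Definition equimatchable (e : rel T) : Prop :=
  forall M N, maximal_matching e M -> maximal_matching e N -> #|M| = #|N|.

Definition del_edge (e : rel T) (f : {set T}) : rel T :=
  fun x y => e x y && ([set x; y] != f).

Definition edge_stable (e : rel T) : Prop :=
  equimatchable e /\ (forall f, is_edge e f -> equimatchable (del_edge e f)).

Definition covered (M : {set {set T}}) (x : T) : bool :=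
  [exists f in M, x \in f].

(* G - v has a perfect matching for every v: a matching of G avoiding v
   and covering every other vertex *)
Definition factor_critical (e : rel T) : Prop :=
  forall v, exists M, matching e M /\ ~~ covered M v /\
    (forall x, x != v -> covered M x).

Definition complete (e : rel T) : Prop := forall x y, x != y -> e x y.

Definition independent (e : rel T) (S : {set T}) : bool :=
  [forall x in S, forall y in S, ~~ e x y].

End Graphs.

(* Main.v *)
Require Import Defs.
From mathcomp Require Import all_boot zify.
Set Implicit Arguments. Unset Strict Implicit. Unset Printing Implicit Defensive.

Section Basic.
Variable T : finType.
Implicit Types (e : rel T) (M L : {set {set T}}).

Lemma is_edgeP e f : reflect (exists x y, e x y /\ f = [set x; y]) (is_edge e f).
Proof.
apply: (iffP existsP) => [[x /existsP [y /andP [exy /eqP ->]]]|[x [y [exy ->]]]].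
  by exists x, y.
by exists x; apply/existsP; exists y; rewrite exy eqxx.
Qed.

Lemma m_edge e M f : matching e M -> f \in M -> is_edge e f.
Proof. by case/andP=> /forall_inP H _; apply: H. Qed.

Lemma m_disj e M f g : matching e M -> f \in M -> g \in M -> f != g -> [disjoint f & g].
Proof. by case/andP=> _ /forall_inP H fM gM; move: (H f fM) => /forall_inP /(_ g gM) /implyP. Qed.

Lemma m_same e M f g w : matching e M -> f \in M -> g \in M -> w \in f -> w \in g -> f = g.
Proof.
move=> hM fM gM wf wg; apply/eqP; apply: contraLR isT => fg.
by have := m_disj hM fM gM fg; rewrite disjoints_subset => /subsetP /(_ w wf); rewrite inE wg.
Qed.

Lemma coveredP M x : reflect (exists2 f, f \in M & x \in f) (covered M x).
Proof. exact: (iffP exists_inP). Qed.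

Lemma matchingI e M : (forall f, f \in M -> is_edge e f) ->
  (forall f g, f \in M -> g \in M -> f != g -> [disjoint f & g]) -> matching e M.
Proof.
move=> H1 H2; apply/andP; split; apply/forall_inP => // f fM.
by apply/forall_inP=> g gM; apply/implyP; apply: H2.
Qed.

Lemma matching_sub e M M' : M' \subset M -> matching e M -> matching e M'.
Proof.
move=> /subsetP sub hM; apply: matchingI => [f /sub|f g /sub fM /sub gM].
  exact: m_edge hM.
exact: m_disj hM fM gM.
Qed.

Lemma covered_add M f z : covered (f |: M) z = (z \in f) || covered M z.
Proof.
apply/coveredP/orP => [[g]|[zf|/coveredP [g gM zg]]].
- by rewrite !inE => /orP [/eqP ->|gM zg]; [left|right; apply/coveredP; exists g].
- by exists f; rewrite ?inE ?eqxx.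
- by exists g; rewrite // !inE gM orbT.
Qed.

Lemma not_covered_in e M f w : matching e (f |: M) -> f \notin M -> w \in f -> ~~ covered M w.
Proof.
move=> hM fM wf; apply/coveredP => [[g gM wg]].
have := m_same hM (setU11 f M) (setU1r f gM) wf wg => fg.
by move: fM; rewrite fg gM.
Qed.

Lemma matching_add e M x y : matching e M -> e x y -> ~~ covered M x -> ~~ covered M y ->
  matching e ([set x; y] |: M).
Proof.
move=> hM exy cx cy; apply: matchingI.
  move=> f; rewrite !inE => /orP [/eqP ->|fM]; last exact: m_edge hM fM.
  by apply/is_edgeP; exists x, y.
have dj g : g \in M -> [disjoint [set x; y] & g].
  move=> gM; rewrite disjoints_subset; apply/subsetP => z; rewrite !inE.
  case/orP => /eqP ->; apply/negP => zg.
    by move/coveredP: cx; apply; exists g.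
  by move/coveredP: cy; apply; exists g.
move=> f g; rewrite !inE => /orP [/eqP ->|fM] /orP [/eqP ->|gM]; rewrite ?eqxx //.
- by move=> _; apply: dj.
- by move=> _; rewrite disjoint_sym; apply: dj.
- exact: m_disj hM fM gM.
Qed.

Lemma maximal_if_exposed e M : matching e M ->
  (forall p q, e p q -> ~~ covered M p -> ~~ covered M q -> False) -> maximal_matching e M.
Proof.
move=> hM H; split => // f /is_edgeP [p [q [epq ->]]] fM; apply/negP => hM'.
apply: (H p q epq); apply: (not_covered_in hM' fM); by rewrite !inE eqxx ?orbT.
Qed.

Lemma covered_cover M z : covered M z = (z \in cover M).
Proof. by apply/coveredP/bigcupP => [[f fM zf]|[f fM zf]]; exists f. Qed.

Lemma card_cover e M : irreflexive e -> matching e M -> #|cover M| = #|M| * 2.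
Proof.
move=> irr hM; apply: card_uniform_partition.
  move=> f /(m_edge hM) /is_edgeP [x [y [exy ->]]]; rewrite cards2.
  by case: eqP exy => // ->; rewrite irr.
rewrite /partition eqxx /=; apply/andP; split.
  by apply/trivIsetP => f g fM gM; apply: m_disj hM fM gM.
apply/negP => /(m_edge hM) /is_edgeP [x [y [_ /setP /(_ x)]]].
by rewrite !inE eqxx.
Qed.

End Basic.

Section Main.
Variable T : finType.
Variable e : rel T.
Hypothesis e_sym : symmetric e.
Hypothesis e_irr : irreflexive e.
Hypothesis hfc : factor_critical e.
Hypothesis hes : edge_stable e.
Implicit Types (M L : {set {set T}}).


Lemma partner M x : matching e M -> covered M x -> exists y, e x y /\ [set x; y] \in M.
Proof.
move=> hM /coveredP [f fM xf]; move: (m_edge hM fM) => /is_edgeP [a [b [eab fab]]].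
move: xf; rewrite fab !inE => /orP [] /eqP ->.
  by exists b; rewrite -fab.
by exists a; rewrite e_sym setUC -fab.
Qed.

Lemma partner_uniq M x y z : matching e M -> [set x; y] \in M -> [set x; z] \in M ->
  e x y -> y = z.
Proof.
move=> hM h1 h2 exy.
have := m_same hM h1 h2 (setU11 _ _) (setU11 _ _) => /setP /(_ y).
rewrite !inE eqxx orbT => /esym /orP [/eqP yx|/eqP //].
by move: exy; rewrite yx e_irr.
Qed.

Lemma in_M_covered M x y : [set x; y] \in M -> covered M x /\ covered M y.
Proof. by move=> h; split; apply/coveredP; exists [set x; y]; rewrite // !inE eqxx ?orbT. Qed.

Lemma matching_del M (f : {set T}) w : matching e M -> w \in f -> ~~ covered M w ->
  matching (del_edge e f) M.
Proof.
move=> hM wf cw; apply: matchingI; last by move=> g h gM hM'; apply: m_disj hM gM hM'.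
move=> g gM; move: (m_edge hM gM) => /is_edgeP [a [b [eab gab]]].
apply/is_edgeP; exists a, b; split => //; rewrite /del_edge eab /=.
apply/negP => /eqP fab; move/negP: cw; apply; apply/coveredP; exists g => //.
by rewrite gab fab.
Qed.

Lemma fcM v : exists M, matching e M /\ forall z, covered M z = (z != v).
Proof.
have [M [hM [cv cz]]] := hfc v; exists M; split => // z.
by case: (eqVneq z v) => [->|/cz]; [apply/negbTE|].
Qed.

Lemma card_fc M v : matching e M -> (forall z, covered M z = (z != v)) ->
  #|M| * 2 = #|T|.-1.
Proof.
move=> hM hc; rewrite -(card_cover e_irr hM) -(cardsC1 v).
have -> // : cover M = [set~ v].
by apply/setP => z; rewrite -covered_cover hc !inE.
Qed.

Lemma card3 (a b c : T) : a != b -> a != c -> b != c -> #|[set a; b; c]| = 3.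
Proof.
move=> ab ac bc; rewrite -setUA cardsU1 cards2 bc !inE negb_or ab ac.
by [].
Qed.

Lemma in3 (p x y z : T) : p \in [set x; y; z] -> [\/ p = x, p = y | p = z].
Proof. by rewrite !inE => /orP [/orP [] /eqP|/eqP] ->; [apply: Or31|apply: Or32|apply: Or33]. Qed.

Lemma sparse_false M x y z : matching e M ->
  (forall w, covered M w = (w \notin [set x; y; z])) ->
  x != y -> x != z -> y != z -> ~~ e x z -> ~~ e y z -> False.
Proof.
move=> hM hc xy xz yz exz eyz.
have cardM : #|M| * 2 + 3 = #|T|.
  rewrite -(card_cover e_irr hM) -(card3 xy xz yz) addnC.
  have -> : cover M = ~: [set x; y; z] by apply/setP => w; rewrite -covered_cover hc in_setC.
  by rewrite cardsC.
have [Mx [hMx cMx]] := fcM x.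
have cx := card_fc hMx cMx.
have n3 : 3 <= #|T| by rewrite -cardM leq_addl.
have neq : #|M| <> #|Mx|.
  move=> eq; move: cx; rewrite -eq; move: cardM; case: #|T| n3 => // n _ <-.
  by rewrite addnS /= => /eqP; rewrite -{1}(addn0 (#|M| * 2)) eqn_add2l.
have inxyz w : ~~ covered M w -> w \in [set x; y; z] by rewrite hc negbK.
have ezx : e z x = false by rewrite e_sym; apply/negbTE.
have ezy : e z y = false by rewrite e_sym; apply/negbTE.
have exz' : e x z = false by apply/negbTE.
have eyz' : e y z = false by apply/negbTE.
have eyx : e y x = e x y by rewrite e_sym.
case exy: (e x y).
-
  have fe : is_edge e [set x; y] by apply/is_edgeP; exists x, y.
  have hxin : x \in [set x; y] by rewrite !inE eqxx.
  have hM' : matching (del_edge e [set x; y]) M.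
    by apply: (matching_del hM hxin); rewrite hc !inE eqxx.
  have hMx' : matching (del_edge e [set x; y]) Mx.
    by apply: (matching_del hMx hxin); rewrite cMx eqxx.
  apply: neq; apply: (hes.2 _ fe).
  + apply: maximal_if_exposed => // p q /andP [epq pq] /inxyz hp /inxyz hq.
    move: epq pq; case/in3: hp => ->; case/in3: hq => ->;
      rewrite ?e_irr ?eyx ?exy ?ezx ?ezy ?exz' ?eyz' //=.
      by rewrite eqxx.
    by rewrite setUC eqxx.
  + apply: maximal_if_exposed => // p q /andP [epq pq].
    by rewrite !cMx !negbK => /eqP pe /eqP qe; move: epq; rewrite pe qe e_irr.
- apply: neq; apply: hes.1.
  + apply: maximal_if_exposed => // p q epq /inxyz hp /inxyz hq.
    move: epq; case/in3: hp => ->; case/in3: hq => ->;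
      by rewrite ?e_irr ?eyx ?exy ?ezx ?ezy ?exz' ?eyz'.
  + apply: maximal_if_exposed => // p q epq.
    by rewrite !cMx !negbK => /eqP pe /eqP qe; move: epq; rewrite pe qe e_irr.
Qed.



Lemma set3C (a b c : T) : [set a; c; b] = [set a; b; c].
Proof. by apply/setP => w; rewrite !inE; case: (w == a); case: (w == b); case: (w == c). Qed.
Lemma set3r (a b c : T) : [set b; c; a] = [set a; b; c].
Proof. by apply/setP => w; rewrite !inE; case: (w == a); case: (w == b); case: (w == c). Qed.

Lemma C3 M a b c : matching e M -> (forall w, covered M w = (w \notin [set a; b; c])) ->
  a != b -> a != c -> b != c -> 2 <= e a b + e a c + e b c.
Proof.
move=> hM hc ab ac bc.
have ba : b != a by rewrite eq_sym.
have ca : c != a by rewrite eq_sym.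
have cb : c != b by rewrite eq_sym.
have SF x y z := @sparse_false M x y z hM.
case eac: (e a c); case ebc: (e b c); case eab: (e a b) => //; exfalso.
- apply: (SF a c b _ ac ab cb); [by move=> w; rewrite set3C hc| by rewrite eab
    | by rewrite (e_sym c b) ebc].
- apply: (SF b c a _ bc ba ca); [by move=> w; rewrite set3r hc| by rewrite (e_sym b a) eab
    | by rewrite (e_sym c a) eac].
- by apply: (SF a b c hc ab ac bc); rewrite ?eac ?ebc.
- by apply: (SF a b c hc ab ac bc); rewrite ?eac ?ebc.
Qed.

Definition closedW M (W : {set T}) :=
  forall g, g \in M -> forall w, w \in g -> w \in W -> g \subset W.

Lemma window M v (W : {set T}) L a b c :
  matching e M -> (forall z, covered M z = (z != v)) -> v \in W -> closedW M W ->
  matching e L -> (forall f, f \in L -> f \subset W) ->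
  (forall z, (z \in W) && ~~ covered L z = (z \in [set a; b; c])) ->
  a != b -> a != c -> b != c ->
  2 <= e a b + e a c + e b c.
Proof.
move=> hM hcM vW clW hL LW hz ab ac bc.
set R := [set g in M | [disjoint g & W]].
have RM : R \subset M by apply/subsetP => g; rewrite inE => /andP [].
have hR : matching e R := matching_sub RM hM.
apply: (C3 (M := R :|: L)) => //.
  apply: matchingI.
    by move=> f; rewrite inE => /orP [fR|fL]; [apply: (m_edge hR fR)|apply: (m_edge hL fL)].
  move=> f g; rewrite !inE => /orP [fR|fL] /orP [gR|gL].
  - exact: m_disj hM (andP fR).1 (andP gR).1.
  - move=> _; move: fR => /andP [_ dj].
    exact: disjointWr (LW g gL) dj.
  - move=> _; move: gR => /andP [_ dj]; rewrite disjoint_sym.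
    exact: disjointWr (LW f fL) dj.
  - exact: m_disj hL fL gL.
move=> z; have := hz z; case zW: (z \in W) => /= hz'.
  rewrite -hz' negbK; apply/coveredP/coveredP => [[f]|[f fL zf]].
    rewrite !inE => /orP [/andP [_ dj] zf|fL zf].
      by move: (disjointFr dj zf); rewrite zW.
    by exists f.
  by exists f; rewrite // inE fL orbT.
rewrite -hz'; apply/coveredP.
have : covered M z by rewrite hcM; apply/eqP => zv; move: zW; rewrite zv vW.
move=> /coveredP [g gM zg]; exists g => //; apply/setUP; left; rewrite inE gM /=.
rewrite disjoints_subset; apply/subsetP => w wg; rewrite inE.
apply/negP => wW; have := clW g gM w wg wW => /subsetP /(_ z zg).
by rewrite zW.
Qed.



Lemma covered0 z : covered (set0 : {set {set T}}) z = false.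
Proof. by apply/coveredP => [[f]]; rewrite inE. Qed.

Lemma matching0 : matching e set0.
Proof. by apply: matchingI => f; rewrite inE. Qed.

Lemma closed_partner M v (W : {set T}) : matching e M -> (forall z, covered M z = (z != v)) ->
  (forall w, w \in W -> w != v -> exists2 x, [set w; x] \in M & x \in W) -> closedW M W.
Proof.
move=> hM hc H g gM w wg wW.
have wv : w != v by rewrite -hc; apply/coveredP; exists g.
have [x wxM xW] := H w wW wv.
rewrite (m_same hM gM wxM wg (setU11 _ _)).
by apply/subsetP => z; rewrite !inE => /orP [] /eqP ->.
Qed.

Lemma set_neq M a a' : matching e M -> [set a; a'] \in M -> a' != a.
Proof.
move=> hM h1.
have /is_edgeP [x [y [exy eq]]] := m_edge hM h1.
have xy : x != y by apply: contraTneq exy => ->; rewrite e_irr.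
have c2 : #|[set a; a']| = 2 by rewrite eq cards2 xy.
rewrite eq_sym; apply/negP => /eqP aa; move: c2; rewrite aa setUid cards1.
by [].
Qed.

Lemma dis4 M a a' b b' : matching e M -> [set a; a'] \in M -> [set b; b'] \in M ->
  a != b -> a != b' -> [/\ a' != b, a' != b' & a' != a].
Proof.
move=> hM h1 h2 ab ab'.
have ne : [set a; a'] != [set b; b'].
  by apply/negP => /eqP /setP /(_ a); rewrite !inE eqxx (negbTE ab) (negbTE ab').
have dj := m_disj hM h1 h2 ne.
have a'in : a' \in [set a; a'] by rewrite !inE eqxx orbT.
have := disjointFr dj a'in; rewrite !inE => /norP [-> ->]; split => //.
exact: set_neq hM h1.
Qed.

Lemma edge_neq x y : e x y -> x != y.
Proof. by apply: contraTneq => ->; rewrite e_irr. Qed.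



Ltac neqs := repeat match goal with
 | H : is_true (?a != ?b) |- context [?a == ?b] => rewrite (negbTE H)
 | H : is_true (?a != ?b) |- context [?b == ?a] => rewrite (eq_sym b a) (negbTE H)
 end.

Ltac zsplit z := repeat (match goal with |- context [z == ?x] =>
   let E := fresh "E" in
   case: (eqVneq z x) => [E|?]; [try rewrite E | idtac]; rewrite ?eqxx /=; neqs; try done end).

Ltac closed_tac hM := apply: (closed_partner hM) => //; move=> z; rewrite !inE;
  repeat (case/orP=> [|/eqP ->]); try (move=> /eqP ->);
  try (by rewrite eqxx); move=> _;
  (match goal with H : is_true ([set ?w; ?x] \in _) |- _ =>
     exists x; [exact H | by rewrite !inE eqxx ?orbT] end).

Ltac match_tac esym := repeat (apply: matching_add;
   [ | first [done | by rewrite esym] | by rewrite ?covered_add ?covered0 ?inE /=; neqs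
     | by rewrite ?covered_add ?covered0 ?inE /=; neqs]); apply: matching0.

Ltac sub_tac := move=> f; rewrite !inE ?orbF; repeat (case/orP=> [/eqP ->|]); try (move=> /eqP ->);
  try done; apply/subsetP => z; rewrite !inE => /orP [] /eqP ->; by rewrite !eqxx ?orbT.

Ltac hz_tac := let z := fresh "z" in intro z; rewrite ?covered_add ?covered0 !inE /= ?andbT ?orbF; zsplit z.

Lemma edge_of M x y : matching e M -> [set x; y] \in M -> e x y.
Proof.
move=> hM h; have /is_edgeP [a [b [eab eq]]] := m_edge hM h.
have yx := set_neq hM h.
have := eq => /setP eq'.
have : x \in [set a; b] by rewrite -eq !inE eqxx.
have : y \in [set a; b] by rewrite -eq !inE eqxx orbT.
rewrite !inE => /orP [] /eqP yE /orP [] /eqP xE; subst;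
  rewrite ?eqxx in yx; first [done | by rewrite e_sym].
Qed.

Lemma L0 M a w w' : matching e M -> (forall z, covered M z = (z != a)) -> [set w; w'] \in M ->
  ~~ e a w -> e a w'.
Proof.
move=> hM hc h naw.
have [cw cw'] := in_M_covered h.
have wa : w != a by rewrite -hc.
have w'a : w' != a by rewrite -hc.
have eww := edge_of hM h.
have ww : w != w' := edge_neq eww.
have h' : [set w'; w] \in M by rewrite setUC.
have := window (W := [set a; w; w']) (L := set0) (a := a) (b := w) (c := w') hM hc.
rewrite (negbTE naw) eww.
case: (e a w') => //; apply => //.
{ by rewrite !inE eqxx. }
{ closed_tac hM. }
{ match_tac e_sym. }
{ sub_tac. }
{ hz_tac. }
{ by rewrite eq_sym. }
{ by rewrite eq_sym. }
Qed.


Lemma window' M v (W : {set T}) L a b c :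
  matching e M -> (forall z, covered M z = (z != v)) -> v \in W -> closedW M W ->
  matching e L -> (forall f, f \in L -> f \subset W) ->
  (forall z, (z \in W) && ~~ covered L z = (z \in [set a; b; c])) ->
  a != b -> a != c -> b != c -> e a b + e a c + e b c <= 1 -> False.
Proof.
move=> h0 h1 h2 h3 h4 h5 h6 h7 h8 h9 H.
by have := window h0 h1 h2 h3 h4 h5 h6 h7 h8 h9; rewrite leqNgt ltnS H.
Qed.

Ltac efacts esym := repeat match goal with
 | H : e ?a ?b = _ |- context [e ?a ?b] => rewrite H
 | H : e ?a ?b = _ |- context [e ?b ?a] => rewrite (esym b a) H
 | H : is_true (e ?a ?b) |- context [e ?a ?b] => rewrite H
 | H : is_true (e ?a ?b) |- context [e ?b ?a] => rewrite (esym b a) H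
 end.

Ltac win_tac hM esym := first [ done | by rewrite !inE eqxx | solve [closed_tac hM]
  | solve [match_tac esym] | solve [sub_tac] | solve [hz_tac] | by rewrite eq_sym
  | by efacts esym | by efacts esym; case: (e _ _) ].

Ltac leaf hM hc W L a b c esym := apply: (window' (W:=W) (L:=L) (a:=a) (b:=b) (c:=c) hM hc);
  win_tac hM esym.

Lemma dis_sets M x y a b : matching e M -> [set x; y] \in M -> [set a; b] \in M ->
  [set x; y] != [set a; b] -> [/\ x != a, x != b, y != a & y != b].
Proof.
move=> hM h1 h2 ne; have dj := m_disj hM h1 h2 ne.
have := disjointFr dj (setU11 x [set y]); rewrite !inE => /norP [-> ->].
have yin : y \in [set x; y] by rewrite !inE eqxx orbT.
by have := disjointFr dj yin; rewrite !inE => /norP [-> ->].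
Qed.

Lemma third_edge M f1 f2 : 3 <= #|M| -> exists2 f, f \in M & (f != f1) && (f != f2).
Proof.
move=> h3; set X := [set f in M | (f != f1) && (f != f2)].
have sub : M \subset X :|: [set f1; f2].
  apply/subsetP => f fM; rewrite !inE fM /=.
  by case: (f == f1); case: (f == f2).
have := subset_leq_card sub => /(leq_trans h3) /leq_trans /(_ (leq_card_setU X [set f1; f2])).
rewrite cards2; case: (set_0Vmem X) => [->|[f]]; first by rewrite cards0; case: (f1 != f2).
by rewrite inE => /andP [fM ne] _; exists f.
Qed.

Lemma NL v u p q : 7 <= #|T| -> ~~ e u v -> e u p -> ~~ e v p -> e v q -> ~~ e u q -> False.
Proof.
move=> h7 nuv eup nvp evq nuq.
have [M [hM hc]] := fcM v.
have nvu : e v u = false by rewrite e_sym; apply/negbTE.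
have nvp' : e v p = false by apply/negbTE.
have nuq' : e u q = false by apply/negbTE.
have uv : u != v by apply/eqP => E; move: nvp; rewrite -E eup.
have pv : p != v by apply/eqP => E; move: nuv; rewrite -E eup.
have qv : q != v by rewrite eq_sym; apply: edge_neq.
have up : u != p := edge_neq eup.
have cu : covered M u by rewrite hc.
have cp : covered M p by rewrite hc.
have [u' [euu hu]] := partner hM cu.
have [p' [epp hp]] := partner hM cp.
have hu' : [set u'; u] \in M by rewrite setUC.
have hp' : [set p'; p] \in M by rewrite setUC.
have evu' : e v u' := L0 hM hc hu (negbT nvu).
have evp' : e v p' := L0 hM hc hp nvp.
have u'v : u' != v by rewrite -hc; case: (in_M_covered hu).
have p'v : p' != v by rewrite -hc; case: (in_M_covered hp).
have u'p : u' != p by apply/eqP => E; move: evu'; rewrite E nvp'.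
have up' : u != p' by apply/eqP => E; move: evp'; rewrite -E nvu.
have [_ u'p' u'u] := dis4 hM hu hp up up'.
have p'p := set_neq hM hp.
have nu'p' : e u' p' = false.
  apply/negP => E.
  leaf hM hc [set v; u; u'; p; p'] ([set u'; p'] |: set0) v u p e_sym.
have cq : covered M q by rewrite hc.
have [q' [eqq hq]] := partner hM cq.
have hq' : [set q'; q] \in M by rewrite setUC.
case: (eqVneq q p') => [qp'|qp'].
  subst p'.
  have nu'p : e u' p = false.
    apply/negP => E.
    leaf hM hc [set v; u; u'; p; q] ([set u'; p] |: set0) v u q e_sym.
  have c3 : 3 <= #|M|.
    have := card_fc hM hc; move: h7; case: #|T| => // n h7 /= h2.
    by rewrite -(leq_pmul2r (_ : 0 < 2)) // h2 -ltnS.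
  have [f fM /andP [f1 f2]] := third_edge [set u; u'] [set p; q] c3.
  have /is_edgeP [x [y [exy fxy]]] := m_edge hM fM.
  subst f.
  have fM' : [set y; x] \in M by rewrite setUC.
  have [xu xu' yu yu'] := dis_sets hM fM hu f1.
  have [xp xq yp yq] := dis_sets hM fM hp f2.
  have xv : x != v by rewrite -hc; case: (in_M_covered fM).
  have yv : y != v by rewrite -hc; case: (in_M_covered fM).
  have xy := edge_neq exy.
  case evx: (e v x).
    case eu'x: (e u' x).
      case euy: (e u y).
        { leaf hM hc [set v; u'; u; p; q; x; y] ([set v;x] |: ([set u;y] |: set0)) u' p q e_sym. }
        { leaf hM hc [set v; u'; u; p; q; x; y] ([set u';x] |: ([set p;q] |: set0)) v u y e_sym. }
    case epx: (e p x).
      case eu'y: (e u' y).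
        { leaf hM hc [set v; u'; u; p; q; x; y] ([set u';y] |: ([set p;x] |: set0)) v u q e_sym. }
        { leaf hM hc [set v; u'; u; p; q; x; y] ([set v;q] |: ([set u;p] |: set0)) u' x y e_sym. }
      case epy: (e p y).
        { leaf hM hc [set v; u'; u; p; q; x; y] ([set v;x] |: ([set p;y] |: set0)) u' u q e_sym. }
        { leaf hM hc [set v; u'; u; p; q; x; y] ([set v;q] |: ([set u';u] |: set0)) p x y e_sym. }
  case eu'x: (e u' x).
    case epx: (e p x).
      case evy: (e v y).
        { leaf hM hc [set v; u'; u; p; q; x; y] ([set v;y] |: ([set p;x] |: set0)) u' u q e_sym. }
        { leaf hM hc [set v; u'; u; p; q; x; y] ([set u';u] |: ([set p;q] |: set0)) v x y e_sym. }
      case epy: (e p y).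
        { leaf hM hc [set v; u'; u; p; q; x; y] ([set u';x] |: ([set p;y] |: set0)) v u q e_sym. }
        { leaf hM hc [set v; u'; u; p; q; x; y] ([set v;q] |: ([set u';u] |: set0)) p x y e_sym. }
    case evy: (e v y).
      case eux: (e u x).
        { leaf hM hc [set v; u'; u; p; q; x; y] ([set v;y] |: ([set u;x] |: set0)) u' p q e_sym. }
        { leaf hM hc [set v; u'; u; p; q; x; y] ([set v;y] |: ([set p;q] |: set0)) u' u x e_sym. }
      { leaf hM hc [set v; u'; u; p; q; x; y] ([set u';u] |: ([set p;q] |: set0)) v x y e_sym. }
have qu : q != u by apply/eqP => E; move: evq; rewrite E nvu.
have qu' : q != u' by apply/eqP => E; move: euu; rewrite -E nuq'.
have qp : q != p by apply/eqP => E; move: evq; rewrite E nvp'.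
have [q'u q'u' q'q] := dis4 hM hq hu qu qu'.
have [q'p q'p' _] := dis4 hM hq hp qp qp'.
have q'v : q' != v by rewrite -hc; case: (in_M_covered hq).
have nu'q' : e u' q' = false.
  apply/negP => E.
  leaf hM hc [set v; u; u'; q; q'] ([set u'; q'] |: set0) v u q e_sym.
leaf hM hc [set v; u; u'; p; p'; q; q'] ([set v; q] |: ([set u; p] |: set0)) u' p' q' e_sym.
Qed.

Lemma global (h7 : 7 <= #|T|) (hnc : ~ complete e) :
  exists S : {set T}, independent e S /\ 2 <= #|S| /\
    (forall x y, x \in S -> y \notin S -> e x y).
Proof.
pose Nb z := [set w | e z w].
have [x0 [y0 [xy0 nexy0]]] : exists x y, x != y /\ ~~ e x y.
  case: (boolP [forall x, forall y, (x != y) ==> e x y]) => [/forallP H|].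
    by exfalso; apply: hnc => x y xy; move: (H x) => /forallP /(_ y) /implyP; apply.
  case/forallPn => x /forallPn [y]; rewrite negb_imply => /andP [xy nxy].
  by exists x, y.
have [r _ rmin] := @arg_minnP T x0 xpredT (fun z => #|Nb z|) isT.
have [s [sr nrs]] : exists s, s != r /\ ~~ e r s.
  case: (boolP [exists s, (s != r) && ~~ e r s]) => [/existsP [s /andP [? ?]]|H].
    by exists s.
  exfalso.
  have c1 : #|Nb x0| + 2 <= #|T|.
    have sub : Nb x0 \subset ~: [set x0; y0].
      apply/subsetP => w; rewrite !inE => exw; rewrite negb_or.
      apply/andP; split; first by apply: contraTneq exw => ->; rewrite e_irr.
      by apply: contraTneq exw => ->.
    have := subset_leq_card sub; have := cardsC [set x0; y0]; rewrite cards2 xy0.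
    move=> h1 h2; lia.
  have c2 : #|T| <= #|Nb r| + 1.
    have sub : [set~ r] \subset Nb r.
      apply/subsetP => w; rewrite !inE => wr; move/existsPn: H => /(_ w).
      by rewrite wr /= negbK.
    have := subset_leq_card sub; rewrite cardsC1.
    have : 0 < #|T| by apply/card_gt0P; exists r.
    move=> h1 h2; lia.
  have := rmin x0 isT; lia.
set C := [set z | ~~ e r z].
have rC : r \in C by rewrite inE e_irr.
have hCK u k : u \in C -> u != r -> e r k -> e u k.
  rewrite inE => nru ur erk; apply/negPn/negP => nuk.
  have sub : ~~ (Nb u \subset Nb r).
    apply/negP => sub; have : Nb u \proper Nb r.
      by rewrite properE sub /=; apply/subsetPn; exists k; rewrite !inE.
    by move/proper_card; rewrite ltnNge rmin.
  case/subsetPn: sub => p; rewrite !inE => eup nrp.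
  by apply: (NL h7 _ eup nrp erk nuk); rewrite e_sym.
case: (boolP (independent e C)) => [indC|].
  exists C; split => //; split.
    apply/card_gt1P; exists r, s; split => //; first by rewrite inE.
    by rewrite eq_sym.
  move=> x y xC; rewrite inE negbK => ery.
  by case: (eqVneq x r) => [->|xr] //; apply: hCK.
case/forall_inPn => u uC /forall_inPn [v vC /negPn euv].
move: (uC) (vC); rewrite !inE => nru nrv.
have ur : u != r by apply/eqP => E; move: nrv; rewrite -E euv.
have vr : v != r by apply/eqP => E; move: nru; rewrite -E e_sym euv.
have uv := edge_neq euv.
have [N [hN hc]] := fcM r.
have cu : covered N u by rewrite hc.
have cv : covered N v by rewrite hc.
have [u' [euu hu]] := partner hN cu.
have [v' [evv hv]] := partner hN cv.
have hu' : [set u'; u] \in N by rewrite setUC.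
have hv' : [set v'; v] \in N by rewrite setUC.
have eru' : e r u' := L0 hN hc hu nru.
have erv' : e r v' := L0 hN hc hv nrv.
have nru' : e r u = false by apply/negbTE.
have nrv' : e r v = false by apply/negbTE.
have u'r : u' != r by rewrite -hc; case: (in_M_covered hu).
have v'r : v' != r by rewrite -hc; case: (in_M_covered hv).
have uv' : u != v' by apply/eqP => E; move: erv'; rewrite -E nru'.
have vu' : v != u' by apply/eqP => E; move: eru'; rewrite -E nrv'.
have [u'v u'v' u'u] := dis4 hN hu hv uv uv'.
have v'v := set_neq hN hv.
have nu'v' : e u' v' = false.
  apply/negP => E.
  leaf hN hc [set r; u; u'; v; v'] ([set u'; v'] |: set0) r u v e_sym.
have neK x y z w : e r x -> e r y -> ~~ e r z -> [set x; y] != [set z; w].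
  move=> erx ery nrz; apply/negP => /eqP E.
  have : z \in [set x; y] by rewrite E !inE eqxx.
  by rewrite !inE => /orP [] /eqP zE; move: nrz; rewrite zE ?erx ?ery.
have noKK x y : [set x; y] \in N -> e r x -> e r y -> False.
  move=> hxy erx ery.
  have hyx : [set y; x] \in N by rewrite setUC.
  have exy := edge_of hN hxy.
  have xy := edge_neq exy.
  have [xu xu' yu yu'] := dis_sets hN hxy hu (neK _ _ _ _ erx ery (negbT nru')).
  have [xv xv' yv yv'] := dis_sets hN hxy hv (neK _ _ _ _ erx ery (negbT nrv')).
  have xr : x != r by rewrite eq_sym; apply: edge_neq.
  have yr : y != r by rewrite eq_sym; apply: edge_neq.
  case eu'x: (e u' x); last first.
    { leaf hN hc [set r; u; u'; v; v'; x; y] ([set u; v] |: ([set r; y] |: set0)) u' v' x e_sym. }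
  case ev'x: (e v' x); last first.
    { leaf hN hc [set r; u; u'; v; v'; x; y] ([set u; v] |: ([set r; y] |: set0)) u' v' x e_sym. }
  case eu'y: (e u' y); last first.
    { leaf hN hc [set r; u; u'; v; v'; x; y] ([set u; v] |: ([set r; x] |: set0)) u' v' y e_sym. }
  case ev'y: (e v' y); last first.
    { leaf hN hc [set r; u; u'; v; v'; x; y] ([set u; v] |: ([set r; x] |: set0)) u' v' y e_sym. }
  leaf hN hc [set r; u; u'; v; v'; x; y] ([set u'; x] |: ([set v'; y] |: set0)) r u v e_sym.
have partK x : e r x -> exists x2, [/\ [set x; x2] \in N, ~~ e r x2, x2 != r
    & forall k, e r k -> e x2 k].
  move=> erx; have xr : x != r by rewrite eq_sym; apply: edge_neq.
  have cx : covered N x by rewrite hc.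
  have [x2 [exx hx]] := partner hN cx.
  have nrx2 : ~~ e r x2 by apply/negP => erx2; apply: (noKK x x2).
  have x2r : x2 != r by rewrite -hc; case: (in_M_covered hx).
  by exists x2; split => // k erk; apply: hCK => //; rewrite inE.
have Kne x z : e r x -> ~~ e r z -> x != z.
  by move=> erx nrz; apply/eqP => E; move: nrz; rewrite -E erx.
have gen x y : e r x -> e r y -> e x y -> x != u' -> x != v' -> False.
  move=> erx ery exy xu' xv'.
  have [x2 [hx nrx2 x2r ex2]] := partK x erx.
  have hx' : [set x2; x] \in N by rewrite setUC.
  have xr : x != r by rewrite eq_sym; apply: edge_neq.
  have yr : y != r by rewrite eq_sym; apply: edge_neq.
  have xu := Kne _ _ erx (negbT nru'). have xv := Kne _ _ erx (negbT nrv').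
  have yu := Kne _ _ ery (negbT nru'). have yv := Kne _ _ ery (negbT nrv').
  have xy := edge_neq exy.
  have [x2u x2u' x2x] := dis4 hN hx hu xu xu'.
  have [x2v x2v' _] := dis4 hN hx hv xv xv'.
  have yx2 := Kne _ _ ery nrx2.
  have ex2u' := ex2 _ eru'. have ex2v' := ex2 _ erv'.
  case: (eqVneq y u') => [yE|yu'].
    subst y.
    leaf hN hc [set r; u; u'; v; v'; x; x2] ([set x; u'] |: ([set v'; x2] |: set0)) r u v e_sym.
  case: (eqVneq y v') => [yE|yv'].
    subst y.
    leaf hN hc [set r; u; u'; v; v'; x; x2] ([set x; v'] |: ([set u'; x2] |: set0)) r u v e_sym.
  have [y2 [hy nry2 y2r ey2]] := partK y ery.
  have hy' : [set y2; y] \in N by rewrite setUC.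
  have [y2u y2u' y2y] := dis4 hN hy hu yu yu'.
  have [y2v y2v' _] := dis4 hN hy hv yv yv'.
  have xy2 := Kne _ _ erx nry2.
  have [x2y x2y2 _] := dis4 hN hx hy xy xy2.
  have ey2u' := ey2 _ eru'. have ey2v' := ey2 _ erv'.
  leaf hN hc [set r; u; u'; v; v'; x; x2; y; y2]
    ([set x; y] |: ([set u'; x2] |: ([set v'; y2] |: set0))) r u v e_sym.
have indK x y : e r x -> e r y -> e x y -> False.
  move=> erx ery exy.
  case: (boolP ((x != u') && (x != v'))) => [/andP [? ?]|nx]; first exact: (gen x y).
  case: (boolP ((y != u') && (y != v'))) => [/andP [yu' yv']|ny].
    by apply: (gen y x ery erx _ yu' yv'); rewrite e_sym.
  move: nx ny exy; rewrite !negb_and !negbK => /orP [] /eqP xE /orP [] /eqP yE; subst x y;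
    by rewrite ?e_irr ?nu'v' // e_sym nu'v'.
exists [set z | e r z]; split; last split.
- apply/forall_inP => x; rewrite inE => erx; apply/forall_inP => y; rewrite inE => ery.
  by apply/negP; apply: indK.
- by apply/card_gt1P; exists u', v'; rewrite !inE eru' erv'.
- move=> x y; rewrite !inE => erx nry.
  case: (eqVneq y r) => [->|yr]; first by rewrite e_sym.
  by rewrite e_sym; apply: hCK => //; rewrite inE.
Qed.

Lemma fc_odd (h : 0 < #|T|) : odd #|T|.
Proof.
have [v _] := card_gt0P h.
have [M [hM hc]] := fcM v.
have := card_fc hM hc; move: h; case: #|T| => // n _ /= <-.
by rewrite oddM andbF.
Qed.

End Main.

Theorem lemma3p4 (T : finType) (e : rel T)
  (e_sym : symmetric e) (e_irr : irreflexive e)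
  (hsize : 7 <= #|T|)
  (hfc : factor_critical e)
  (hes : edge_stable e)
  (hnK : ~ (complete e /\ odd #|T|)) :
  exists S : {set T}, independent e S /\ 2 <= #|S| /\
    (forall x y, x \in S -> y \notin S -> e x y).
Proof.
apply: (global e_sym e_irr hfc hes hsize) => hc; apply: hnK; split => //.
by apply: (fc_odd e_irr hfc); apply: leq_trans hsize.
Qed.
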